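(* Let $X$ be a real Banach space. Then $\operatorname{sm}(B_X)\in\{0,1\}$.
   Context: $B_X$ is the closed unit ball of $X$. A bounded sequence $(y_k)$ generates an $\ell_1$-spreading model with $\delta>0$ if $\|\sum_{i\in F}\alpha_i y_i\|\ge\delta\sum_{i\in F}|\alpha_i|$ for every finite $F\subset\mathbb N$ with $\#F\le\min F$ and all real scalars $(\alpha_i)_{i\in F}$. For a bounded set $A$, $\operatorname{sm}(A)=\sup\{\delta>0: \exists (x_k)\subset A,\ x_k\to x\text{ weakly for some }x\in X,\ (x_k-x)\text{ generates an }\ell_1\text{-spreading model with }\delta\}$, with the convention $\sup\emptyset=0$. *)

(* Defs.v *)
From HB Require Import structures.
From mathcomp Require Import all_boot all_order all_algebra.
From mathcomp Require Import all_classical all_reals all_analysis.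
Set Implicit Arguments. Unset Strict Implicit. Unset Printing Implicit Defensive.
Import Order.TTheory GRing.Theory Num.Theory.
Import numFieldNormedType.Exports.
Local Open Scope classical_set_scope.
Local Open Scope ring_scope.

Definition closed_unit_ball (R : realType) (X : normedModType R) : set X :=
  [set x | `|x| <= 1].

Definition weak_cvg (R : realType) (X : normedModType R)
  (u : nat -> X) (x : X) : Prop :=
  forall f : X -> R,
    (forall (a : R) (y z : X), f (a *: y + z) = a * f y + f z) ->
    continuous f ->
    (fun k => f (u k)) @ \oo --> f x.

(* The sequence is indexed by nat, term k being the (k+1)-th term y_{k+1}
   of the paper's sequence indexed by N = {1,2,...}; hence the condition
   #F <= min F reads  size F <= i.+1  for all i in F. *)
Definition l1_spreading (R : realType) (X : normedModType R)
  (y : nat -> X) (delta : R) : Prop :=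
  forall (F : seq nat) (alpha : nat -> R),
    uniq F -> (forall i, i \in F -> (size F <= i.+1)%N) ->
    delta * (\sum_(i <- F) `|alpha i|) <= `|\sum_(i <- F) alpha i *: y i|.

Definition sm_set (R : realType) (X : normedModType R) (A : set X) : set R :=
  [set delta | 0 < delta /\
     exists (u : nat -> X) (x : X),
       (forall k, A (u k)) /\ weak_cvg u x /\
       l1_spreading (fun k => u k - x) delta].

Definition sm (R : realType) (X : normedModType R) (A : set X) : R :=
  if pselect (exists d, sm_set A d) then sup (sm_set A) else 0.

(* Main.v *)
Require Import Defs.
From HB Require Import structures.
From mathcomp Require Import all_boot all_order all_algebra.
From mathcomp Require Import all_classical all_reals all_analysis.
From mathcomp Require Import ring lra.
Import Order.TTheory GRing.Theory Num.Theory.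
Import numFieldNormedType.Exports.
Local Open Scope classical_set_scope.
Local Open Scope ring_scope.


Lemma lin0 (R : realType) (X : normedModType R) (f : X -> R) :
  (forall (a : R) (y z : X), f (a *: y + z) = a * f y + f z) -> f 0 = 0.
Proof.
move=> hf; have := hf 1 0 0; rewrite scale1r addr0 mul1r.
by move=> /(congr1 (fun t => t - f 0)); rewrite addrK subrr.
Qed.

Lemma linZ (R : realType) (X : normedModType R) (f : X -> R) :
  (forall (a : R) (y z : X), f (a *: y + z) = a * f y + f z) ->
  forall a y, f (a *: y) = a * f y.
Proof. by move=> hf a y; rewrite -[a *: y]addr0 hf lin0 // addr0. Qed.

Lemma linB (R : realType) (X : normedModType R) (f : X -> R) :
  (forall (a : R) (y z : X), f (a *: y + z) = a * f y + f z) ->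
  forall y z, f (y - z) = f y - f z.
Proof.
move=> hf y z; by rewrite -scaleN1r addrC hf mulN1r addrC.
Qed.

Lemma linS (R : realType) (X : normedModType R) (f : X -> R) :
  (forall (a : R) (y z : X), f (a *: y + z) = a * f y + f z) ->
  forall (s : seq nat) (g : nat -> R) (v : nat -> X),
    f (\sum_(i <- s) g i *: v i) = \sum_(i <- s) g i * f (v i).
Proof.
move=> hf; elim=> [|k s IH] g v; first by rewrite !big_nil lin0.
by rewrite !big_cons hf IH.
Qed.

Lemma seq_min (F : seq nat) : F != [::] ->
  exists2 k0, k0 \in F & forall j, j \in F -> (k0 <= j)%N.
Proof.
elim: F => [//|x F IH] _.
case: (eqVneq F [::]) => [->|/IH [m mF hm]].
  by exists x; rewrite ?mem_head // => j; rewrite inE => /eqP->.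
exists (minn x m).
  by rewrite /minn; case: ifP => _; rewrite inE ?eqxx ?mF ?orbT.
move=> j; rewrite inE => /orP[/eqP->|/hm]; first by rewrite geq_minl.
by move=> mj; rewrite geq_min mj orbT.
Qed.

Lemma size_flat (G : nat -> seq nat) N (F : seq nat) :
  (forall k, (size (G k) <= N)%N) ->
  (size (flatten [seq G k | k <- F]) <= size F * N)%N.
Proof.
move=> hG; elim: F => [//|k F IH] /=.
by rewrite size_cat mulSn leq_add.
Qed.

Fixpoint stf (thr : nat -> nat) (blkG : nat -> seq nat) (N : nat) (k : nat) : nat :=
  match k with
  | 0 => thr (N.+1 * 1)%N
  | k'.+1 => maxn (maxn (thr (N.+1 * k'.+2)%N) k'.+1)
        (maxn (stf thr blkG N k').+1 (\max_(i <- blkG (stf thr blkG N k')) i).+1)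
  end.

Lemma st_thr thr blkG N k : (thr (N.+1 * k.+1)%N <= stf thr blkG N k)%N.
Proof. case: k => [//|k] /=; by rewrite !leq_max leqnn. Qed.

Lemma st_ge thr blkG N k : (k <= stf thr blkG N k)%N.
Proof. case: k => [//|k] /=; by rewrite !leq_max leqnn orbT. Qed.

Lemma st_lt thr blkG N k : (stf thr blkG N k < stf thr blkG N k.+1)%N.
Proof. by rewrite /= !leq_max leqnn !orbT. Qed.

Lemma st_blk thr blkG N k i : i \in blkG (stf thr blkG N k) ->
  (i < stf thr blkG N k.+1)%N.
Proof.
move=> iG; rewrite /= !leq_max ltnS; apply/orP; right; apply/orP; right.
by apply: leq_bigmax_seq.
Qed.

Lemma st_mono thr blkG N k j : (k <= j)%N ->
  (stf thr blkG N k <= stf thr blkG N j)%N.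
Proof.
move=> kj; apply: (homo_leq (r := leq)) => //; first exact: leq_trans.
by move=> i; apply: ltnW; apply: st_lt.
Qed.
Definition Pl (R : realType) (X : normedModType R) (y : nat -> X) (M m : nat) (r : R) :=
  forall (H : seq nat) (g : nat -> R), uniq H -> (forall i, i \in H -> (m <= i)%N) ->
    (size H <= M.+1)%N ->
    r * \sum_(i <- H) `|g i| <= `|\sum_(i <- H) g i *: y i|.
Arguments Pl {R X}.

Lemma construct (R : realType) (X : normedModType R) (y : nat -> X) (d B a b : R) :
  0 < d -> (forall i, `|y i| <= B) -> l1_spreading y d -> weak_cvg y 0 ->
  0 < b -> b < 1 -> 1 < a ->
  exists u : nat -> X, (forall k, `|u k| <= 1) /\ weak_cvg u 0 /\
     l1_spreading (fun k => u k - 0) (b / a).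
Proof.
move=> d0 hB hsp hw b0 b1 a1.
pose S M := [set r : R | exists m, Pl y M m r].
pose L M := sup (S M).
have hdS M : S M d.
  exists M.+1 => H g uH Hm sH; apply: hsp => // i /Hm Mi.
  by apply: (leq_trans sH); apply: (leq_trans Mi).
have hSub M : ubound (S M) B.
  move=> r [m Pm]; have := Pm [:: m] (fun=> 1) isT.
  rewrite !big_seq1 normr1 mulr1 scale1r => /(_ _ isT).
  by move=> h; apply: le_trans (h _) (hB m) => i; rewrite inE => /eqP->.
have hsup M : has_sup (S M) by split; [exists d | exists B].
have hLd M : d <= L M by apply: sup_upper_bound.
pose lam := inf (range L).
have hinf : has_inf (range L) by split; [exists (L 0%N), 0%N | exists d => _ [M _ <-]].
have lamd : d <= lam by apply: lb_le_inf; [exists (L 0%N), 0%N | move=> _ [M _ <-]].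
have lam0 : 0 < lam by apply: lt_le_trans lamd.
have lamL M : lam <= L M by apply: ge_inf; [case: hinf | exists M].
have [t [N _ <-] LN] : exists2 t, range L t & t < lam * a.
  have := @inf_adherent R (range L) (lam * (a - 1)) _ hinf.
  rewrite mulr_gt0 ?subr_gt0 // => /(_ isT) [t Lt ht]; exists t => //.
  by move: ht; rewrite mulrBr mulr1 addrC subrK.
pose c := lam * a.
have c0 : 0 < c by rewrite mulr_gt0 // (lt_trans _ a1).
have hblk m : exists p : seq nat * (nat -> R), [/\ uniq p.1,
    (forall i, i \in p.1 -> (m <= i)%N), (size p.1 <= N.+1)%N &
    `|\sum_(i <- p.1) p.2 i *: y i| < c * \sum_(i <- p.1) `|p.2 i| ].
  case: (pselect (exists p : seq nat * (nat -> R), [/\ uniq p.1,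
    (forall i, i \in p.1 -> (m <= i)%N), (size p.1 <= N.+1)%N &
    `|\sum_(i <- p.1) p.2 i *: y i| < c * \sum_(i <- p.1) `|p.2 i| ])) => // nH.
  exfalso.
  have Pm : Pl y N m c.
    move=> H g uH Hm sH; rewrite leNgt; apply/negP => lt.
    by apply: nH; exists (H, g).
  have : c <= L N by apply: sup_upper_bound => //; exists m.
  by rewrite leNgt LN.
have hthr M : exists m, Pl y M m (lam * b).
  have := @sup_adherent R (S M) (L M - lam * b) _ (hsup M).
  rewrite subr_gt0 (lt_le_trans _ (lamL M)) ?gtr_pMr // => /(_ isT) [r [m Pm]].
  rewrite opprB addrC subrK => lr; exists m => H g uH Hm sH.
  apply: le_trans (Pm H g uH Hm sH); apply: ler_wpM2r; last exact: ltW.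
  by apply: sumr_ge0 => i _.
pose blk m := proj1_sig (cid (hblk m)).
have blkP m := proj2_sig (cid (hblk m)).
pose thr M := proj1_sig (cid (hthr M)).
have thrP M : Pl y M (thr M) (lam * b) := proj2_sig (cid (hthr M)).
pose st := stf thr (fun m => (blk m).1) N.
pose G k := (blk (st k)).1.
pose g k := (blk (st k)).2.
pose s k := \sum_(i <- G k) `|g k i|.
have Gin k i : i \in G k -> (st k <= i)%N /\ (i < st k.+1)%N.
  move=> iG; split; first by case: (blkP (st k)) => _ h _ _; apply: h.
  exact: st_blk.
have Gdisj k j i : k != j -> i \in G k -> i \in G j -> False.
  move=> kj /Gin [h1 h2] /Gin [h3 h4].
  case: (ltngtP k j) kj => // [kj|jk] _.
    have := @st_mono thr (fun m => (blk m).1) N _ _ kj.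
    rewrite -/st => h; have := leq_trans h h3; by rewrite leqNgt h2.
  have := @st_mono thr (fun m => (blk m).1) N _ _ jk.
  rewrite -/st => h; have := leq_trans h h1; by rewrite leqNgt h4.
have s0 k : 0 < s k.
  rewrite /s /G /g; case: (blkP (st k)) => _ _ _ h.
  by have := le_lt_trans (normr_ge0 _) h; rewrite pmulr_rgt0.
pose u k := (c * s k)^-1 *: \sum_(i <- G k) g k i *: y i.
exists u; split; [|split].
- move=> k; rewrite /u normrZ ger0_norm; last by rewrite invr_ge0; apply/ltW/mulr_gt0.
  rewrite mulrC ler_pdivrMr; last exact: mulr_gt0.
  rewrite mul1r; apply: ltW; by case: (blkP (st k)).
- move=> f hf hc; rewrite lin0 //.
  apply/cvgrPdist_le => e e0.
  have := hw f hf hc; rewrite lin0 // => /cvgrPdist_le /(_ (e * c)).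
  rewrite mulr_gt0 // => /(_ isT) [K _ HK].
  exists K => // n /= Kn.
  rewrite sub0r normrN /u linZ // linS // normrM ger0_norm; last first.
    by rewrite invr_ge0; apply/ltW/mulr_gt0.
  rewrite mulrC ler_pdivrMr; last exact: mulr_gt0.
  apply: le_trans (ler_norm_sum _ _ _) _.
  have -> : e * (c * s n) = s n * (e * c) by ring.
  rewrite /s mulr_suml.
  rewrite !big_seq; apply: ler_sum => i iG; rewrite normrM; apply: ler_wpM2l => //.
  have := HK i; rewrite /= sub0r normrN; apply.
  have [h _] := Gin n i iG; apply: leq_trans h.
  exact: leq_trans Kn (st_ge _ _ _ _).
- move=> F alpha uF hF.
  rewrite (eq_bigr (fun i => alpha i *: u i)); last by move=> i _; rewrite subr0.
  case: (eqVneq F [::]) => [->|Fne].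
    by rewrite !big_nil mulr0.
  have [k0 k0F k0min] := @seq_min F Fne.
  pose H := flatten [seq G k | k <- F].
  pose gam i := \sum_(k <- F) (if i \in G k then alpha k * (c * s k)^-1 * g k i else 0).
  have gamE k i : k \in F -> i \in G k -> gam i = alpha k * (c * s k)^-1 * g k i.
    move=> kF iG; rewrite /gam (bigD1_seq k) //= iG big1_seq ?addr0 //.
    move=> j /andP [jk jF]; case: ifP => // iGj.
    by exfalso; apply: (Gdisj j k i jk).
  have uflat : forall F', uniq F' -> uniq (flatten [seq G k | k <- F']).
    elim=> [//|k F' IH] /= /andP [kF uF'].
    rewrite cat_uniq IH // andbT; apply/andP; split.
      by rewrite /G; case: (blkP (st k)).
    apply/hasPn => i /flattenP [s' /mapP [j jF ->] ij]; apply/negP => ik.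
    have jk : j != k by apply: contraNneq kF => <-.
    exact: (Gdisj j k i jk).
  have uH : uniq H by apply: uflat.
  have geH i : i \in H -> (thr (N.+1 * k0.+1)%N <= i)%N.
    move=> /flattenP [s' /mapP [j jF ->] ij].
    have [h _] := Gin j i ij; apply: leq_trans h.
    apply: leq_trans (st_thr _ _ _ _) _.
    exact: st_mono (k0min j jF).
  have sH : (size H <= (N.+1 * k0.+1)%N.+1)%N.
    apply: (@leq_trans (N.+1 * k0.+1)%N); last exact: leqnSn.
    apply: (leq_trans (size_flat G N.+1 F _)).
      by move=> k; rewrite /G; case: (blkP (st k)).
    by rewrite mulnC; apply: leq_mul => //; apply: hF.
  have := thrP _ H gam uH geH sH.
  have -> : \sum_(i <- H) gam i *: y i = \sum_(k <- F) alpha k *: u k.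
    rewrite /H big_flatten big_map; apply: eq_big_seq => k kF.
    rewrite /u scalerA scaler_sumr; apply: eq_big_seq => i iG.
    by rewrite (gamE k i kF iG) scalerA.
  have -> : \sum_(i <- H) `|gam i| = (\sum_(k <- F) `|alpha k|) / c.
    rewrite /H big_flatten big_map mulr_suml; apply: eq_big_seq => k kF.
    rewrite (eq_big_seq (fun i => `|alpha k| * (c * s k)^-1 * `|g k i|)); last first.
      move=> i iG; rewrite (gamE k i kF iG) !normrM [`|_^-1|]ger0_norm //.
      by rewrite invr_ge0; apply/ltW/mulr_gt0.
    rewrite -mulr_sumr -/(s k).
    have sk0 := lt0r_neq0 (s0 k); have cn0 := lt0r_neq0 c0.
    by field; rewrite sk0 cn0.
  apply: le_trans; rewrite /c.
  have -> : b / a * \sum_(k <- F) `|alpha k| = lam * b * ((\sum_(k <- F) `|alpha k|) / (lam * a)).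
    have an0 : a != 0 by apply: lt0r_neq0; apply: lt_trans a1.
    by field; rewrite an0 (lt0r_neq0 lam0).
  by [].
Qed.

Theorem lemma5p3 (R : realType) (X : completeNormedModType R) :
  @sm R X (@closed_unit_ball R X) = 0 \/ @sm R X (@closed_unit_ball R X) = 1.
Proof.
rewrite /sm; destruct (pselect (exists d, sm_set (@closed_unit_ball R X) d)) as [[d0 Sd0]|nS]; last by left.
right.
set S := sm_set _.
have ub t : S t -> t <= 1.
  move=> [t0 [u [x [uB [_ hsp]]]]].
  have := hsp [:: 1%N; 2%N] (fun i => if i == 1%N then 1 else -1) isT.
  have adm : forall i, i \in [:: 1%N; 2%N] -> (size [:: 1%N; 2%N] <= i.+1)%N.
    by move=> i; rewrite !inE => /orP[]/eqP->.
  move=> /(_ adm); rewrite !big_cons !big_nil /= !addr0 normrN normr1 scale1r scaleN1r.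
  rewrite opprB addrA subrK => h.
  have : t * (1 + 1) <= 1 + 1.
    apply: le_trans h _.
    by apply: le_trans (ler_normB _ _) _; apply: lerD; [apply: uB | apply: uB].
  lra.
have hsup : has_sup S by split; [exists d0 | exists 1].
apply/eqP; rewrite eq_le; apply/andP; split.
  by apply: ge_sup => //; exists d0.
rewrite leNgt; apply/negP => slt.
set s := sup S in slt.
have sd0 : d0 <= s by apply: sup_upper_bound.
case: Sd0 => d00 [u [x [uB [hux hsp]]]].
have s0 : 0 < s by apply: lt_le_trans sd0.
pose b := (1 + s) / 2.
pose a := 2 / (1 + s).
have b0 : 0 < b by rewrite /b; apply: divr_gt0; lra.
have b1 : b < 1 by rewrite /b ltr_pdivrMr; lra.
have a1 : 1 < a by rewrite /a ltr_pdivlMr; lra.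
have hwy : weak_cvg (fun k => u k - x) 0.
  move=> f hf hc; rewrite lin0 //.
  have -> : (fun k => f (u k - x)) = (fun k => f (u k) - f x).
    by apply/funext => k; rewrite linB.
  rewrite -(subrr (f x)); apply: cvgB; [exact: hux | exact: cvg_cst].
have [v [vB [hv hvs]]] := @construct R X (fun k => u k - x) d0 (1 + `|x|) a b d00
(fun i => le_trans (ler_normB _ _) (lerD (uB i) (lexx _))) hsp hwy b0 b1 a1.
have : S (b / a).
  split; first by apply: divr_gt0 => //; apply: lt_trans a1.
  exists v, 0; split => //; split => //.
move=> /(sup_upper_bound hsup); rewrite -/s.
have -> : b / a = b * b by rewrite /a /b; field; lra.
rewrite /b; nra.
Qed.
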